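(* Let $X, Y \subseteq \omega$. There exists an embedding $\mathcal{K}^X_2 \hookrightarrow \mathcal{K}^Y_2$ if and only if $X \le_T Y$.
   Context: A pca is a set with a partial binary application operation containing distinct $\mathrm{s},\mathrm{k}$ with $\mathrm{k}ab\downarrow=a$, $\mathrm{s}ab\downarrow$, $\mathrm{s}abc\simeq(ac)(bc)$. An embedding of pcas is an injective map $f$ with: if $ab$ is defined then $f(a)f(b)$ is defined and equals $f(ab)$. $\mathcal{K}_2^Z$: elements are the total $Z$-computable functions $g:\omega\to\omega$, with $g\cdot h$ the function $n\mapsto\Phi^{g\oplus h}_{g(0)}(n)$ ($\Phi_e$ the $e$-th Turing functional, $(g\oplus h)(2n)=g(n)$, $(g\oplus h)(2n+1)=h(n)$), defined if and only if this function is total. *)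

(* Defs.v *)
From HB Require Import structures.
From mathcomp Require Import all_boot.
From Stdlib Require Import Cantor.

Set Implicit Arguments.
Unset Strict Implicit.
Unset Printing Implicit Defensive.

Definition cpair (x y : nat) : nat := Cantor.to_nat (x, y).
Definition cfst (n : nat) : nat := fst (Cantor.of_nat n).
Definition csnd (n : nat) : nat := snd (Cantor.of_nat n).

(* Unary partial recursive function terms relative to an oracle
   (a standard Turing-complete basis over a pairing function). *)
Inductive prog : Type :=
| PZero
| PSucc
| PId
| POrc
| PFst
| PSnd
| PComp of prog & prog       (* PComp h g : x |-> h (g x) *)
| PPair of prog & prog
| PRec of prog & prog
| PMu of prog.

Fixpoint prog_enc (p : prog) : GenTree.tree unit :=
  match p with
  | PZero => GenTree.Node 0 [::]
  | PSucc => GenTree.Node 1 [::]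
  | PId => GenTree.Node 2 [::]
  | POrc => GenTree.Node 3 [::]
  | PFst => GenTree.Node 4 [::]
  | PSnd => GenTree.Node 5 [::]
  | PComp a b => GenTree.Node 6 [:: prog_enc a; prog_enc b]
  | PPair a b => GenTree.Node 7 [:: prog_enc a; prog_enc b]
  | PRec a b => GenTree.Node 8 [:: prog_enc a; prog_enc b]
  | PMu a => GenTree.Node 9 [:: prog_enc a]
  end.

Fixpoint prog_dec (t : GenTree.tree unit) : option prog :=
  match t with
  | GenTree.Leaf _ => None
  | GenTree.Node 0 [::] => Some PZero
  | GenTree.Node 1 [::] => Some PSucc
  | GenTree.Node 2 [::] => Some PId
  | GenTree.Node 3 [::] => Some POrc
  | GenTree.Node 4 [::] => Some PFst
  | GenTree.Node 5 [::] => Some PSnd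
  | GenTree.Node 6 [:: a; b] =>
      match prog_dec a, prog_dec b with Some x, Some y => Some (PComp x y) | _, _ => None end
  | GenTree.Node 7 [:: a; b] =>
      match prog_dec a, prog_dec b with Some x, Some y => Some (PPair x y) | _, _ => None end
  | GenTree.Node 8 [:: a; b] =>
      match prog_dec a, prog_dec b with Some x, Some y => Some (PRec x y) | _, _ => None end
  | GenTree.Node 9 [:: a] =>
      match prog_dec a with Some x => Some (PMu x) | None => None end
  | _ => None
  end.

Lemma prog_encK : pcancel prog_enc prog_dec.
Proof. by elim=> //= [a -> b ->|a -> b ->|a -> b ->|a ->]. Qed.

HB.instance Definition _ := Countable.copy prog (pcan_type prog_encK).

Inductive eval (f : nat -> nat) : prog -> nat -> nat -> Prop :=
| eZero x : eval f PZero x 0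
| eSucc x : eval f PSucc x x.+1
| eId x : eval f PId x x
| eOrc x : eval f POrc x (f x)
| eFst x : eval f PFst x (cfst x)
| eSnd x : eval f PSnd x (csnd x)
| eComp h g x y z : eval f g x y -> eval f h y z -> eval f (PComp h g) x z
| ePair a b x u v : eval f a x u -> eval f b x v -> eval f (PPair a b) x (cpair u v)
| eRec0 b s x v : eval f b x v -> eval f (PRec b s) (cpair x 0) v
| eRecS b s x y r v :
    eval f (PRec b s) (cpair x y) r ->
    eval f s (cpair x (cpair y r)) v ->
    eval f (PRec b s) (cpair x y.+1) v
| eMu t x y :
    eval f t (cpair x y) 0 ->
    (forall z, z < y -> exists w, eval f t (cpair x z) w /\ w <> 0) ->
    eval f (PMu t) x y.

(* Acceptable numbering of programs: e |-> the e-th program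
   (codes not denoting a program denote the nowhere-defined program). *)
Definition prog_of_index (e : nat) : prog :=
  match unpickle e with Some p => p | None => PMu PSucc end.

Definition Phi (e : nat) (f : nat -> nat) (n v : nat) : Prop :=
  eval f (prog_of_index e) n v.

(* Sets of naturals are represented by boolean predicates. *)
Definition chi (Z : nat -> bool) (n : nat) : nat := nat_of_bool (Z n).

Definition Zcomputable (Z : nat -> bool) (g : nat -> nat) : Prop :=
  exists e, forall n, Phi e (chi Z) n (g n).

Definition Treducible (X Y : nat -> bool) : Prop := Zcomputable Y (chi X).

Definition join (g h : nat -> nat) (n : nat) : nat :=
  if odd n then h n./2 else g n./2.

Definition K2 (Z : nat -> bool) : Type := {g : nat -> nat | Zcomputable Z g}.

(* Partial application of K_2^Z as a relation: [K2app a b c] iff a.b is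
   defined (i.e. n |-> Phi_{a(0)}^{a (+) b}(n) is total) and equals c. *)
Definition K2app (Z : nat -> bool) (a b c : K2 Z) : Prop :=
  forall n, Phi (proj1_sig a 0) (join (proj1_sig a) (proj1_sig b)) n (proj1_sig c n).

Definition K2_embedding (X Y : nat -> bool) (f : K2 X -> K2 Y) : Prop :=
  injective f /\
  forall a b c : K2 X, K2app a b c -> K2app (f a) (f b) (f c).

(* Main.v *)
Require Import Defs.
From mathcomp Require Import all_boot.
From Stdlib Require Import Cantor Lia ProofIrrelevance FunctionalExtensionality Classical.
From mathcomp Require Import zify.
Set Implicit Arguments.
Unset Strict Implicit.
Unset Printing Implicit Defensive.

Lemma cfst_pair a b : cfst (cpair a b) = a.
Proof. by rewrite /cfst /cpair Cantor.cancel_of_to. Qed.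
Lemma csnd_pair a b : csnd (cpair a b) = b.
Proof. by rewrite /csnd /cpair Cantor.cancel_of_to. Qed.
Lemma cpair_eta c : cpair (cfst c) (csnd c) = c.
Proof. by rewrite /cfst /csnd /cpair -surjective_pairing Cantor.cancel_to_of. Qed.

Section EvalInd.
Variable f : nat -> nat.
Variable P : prog -> nat -> nat -> Prop.
Hypothesis HZero : forall x, P PZero x 0.
Hypothesis HSucc : forall x, P PSucc x x.+1.
Hypothesis HId : forall x, P PId x x.
Hypothesis HOrc : forall x, P POrc x (f x).
Hypothesis HFst : forall x, P PFst x (cfst x).
Hypothesis HSnd : forall x, P PSnd x (csnd x).
Hypothesis HComp : forall h g x y z, eval f g x y -> P g x y -> eval f h y z -> P h y z -> P (PComp h g) x z.
Hypothesis HPair : forall a b x u v, eval f a x u -> P a x u -> eval f b x v -> P b x v -> P (PPair a b) x (cpair u v).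
Hypothesis HRec0 : forall b s x v, eval f b x v -> P b x v -> P (PRec b s) (cpair x 0) v.
Hypothesis HRecS : forall b s x y r v, eval f (PRec b s) (cpair x y) r -> P (PRec b s) (cpair x y) r ->
  eval f s (cpair x (cpair y r)) v -> P s (cpair x (cpair y r)) v -> P (PRec b s) (cpair x y.+1) v.
Hypothesis HMu : forall t x y, eval f t (cpair x y) 0 -> P t (cpair x y) 0 ->
  (forall z, z < y -> exists w, [/\ eval f t (cpair x z) w, w <> 0 & P t (cpair x z) w]) ->
  P (PMu t) x y.

Fixpoint eval_ind2 p x v (H : eval f p x v) {struct H} : P p x v :=
  match H in eval _ p x v return P p x v with
  | eZero x => HZero x
  | eSucc x => HSucc x
  | eId x => HId x
  | eOrc x => HOrc x
  | eFst x => HFst x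
  | eSnd x => HSnd x
  | eComp h g x y z H1 H2 => HComp H1 (eval_ind2 H1) H2 (eval_ind2 H2)
  | ePair a b x u v H1 H2 => HPair H1 (eval_ind2 H1) H2 (eval_ind2 H2)
  | eRec0 b s x v H1 => HRec0 s H1 (eval_ind2 H1)
  | eRecS b s x y r v H1 H2 => HRecS H1 (eval_ind2 H1) H2 (eval_ind2 H2)
  | eMu t x y H1 H2 => HMu H1 (eval_ind2 H1)
      (fun z hz => match H2 z hz with
                   | ex_intro w (conj Hw Hne) => ex_intro _ w (And3 Hw Hne (eval_ind2 Hw)) end)
  end.
End EvalInd.

Fixpoint subst (p q : prog) : prog :=
  match p with
  | POrc => q
  | PComp a b => PComp (subst a q) (subst b q)
  | PPair a b => PPair (subst a q) (subst b q)
  | PRec a b => PRec (subst a q) (subst b q)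
  | PMu a => PMu (subst a q)
  | p => p
  end.

Lemma eval_subst f f' q p x v : (forall n, eval f' q n (f n)) ->
  eval f p x v -> eval f' (subst p q) x v.
Proof.
move=> Hq H; elim/eval_ind2: H => /=; try by move=> *; first [apply: Hq | constructor].
all: try by move=> *; econstructor; eauto.
move=> t x0 y _ H0 Hz; constructor => // z hz.
  by case: (Hz z hz) => w [_ ? ?]; exists w.
Qed.

Section Comp.
Variable o : nat -> nat.
Definition comp (F : nat -> nat) := exists p, forall x, eval o p x (F x).

Lemma comp_ext F G : (forall x, F x = G x) -> comp F -> comp G.
Proof. by move=> E [p Hp]; exists p => x; rewrite -E. Qed.

Lemma comp_id : comp (fun c => c).
Proof. by exists PId => x; constructor. Qed.
Lemma comp_o : comp o.
Proof. by exists POrc => x; constructor. Qed.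
Lemma comp_comp G F : comp G -> comp F -> comp (fun x => G (F x)).
Proof. by move=> [p Hp] [q Hq]; exists (PComp p q) => x; econstructor; eauto. Qed.
Lemma comp_0 : comp (fun _ => 0).
Proof. by exists PZero => x; constructor. Qed.
Lemma comp_S A : comp A -> comp (fun c => (A c).+1).
Proof. move=> HA; apply: (comp_comp (G := S)) => //; by exists PSucc => x; constructor. Qed.
Lemma comp_const k : comp (fun _ => k).
Proof. elim: k => [|k IH]; [exact: comp_0|exact: comp_S]. Qed.
Lemma comp_fst A : comp A -> comp (fun c => cfst (A c)).
Proof. move=> HA; apply: (comp_comp (G := cfst)) => //; by exists PFst => x; constructor. Qed.
Lemma comp_snd A : comp A -> comp (fun c => csnd (A c)).
Proof. move=> HA; apply: (comp_comp (G := csnd)) => //; by exists PSnd => x; constructor. Qed.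
Lemma comp_oc A : comp A -> comp (fun c => o (A c)).
Proof. move=> HA; apply: (comp_comp (G := o)) => //; exact: comp_o. Qed.
Lemma comp_pair A B : comp A -> comp B -> comp (fun c => cpair (A c) (B c)).
Proof. by move=> [p Hp] [q Hq]; exists (PPair p q) => x; constructor. Qed.

Fixpoint Rec0 (b : nat) (s : nat -> nat -> nat) (n : nat) : nat :=
  match n with 0 => b | i.+1 => s i (Rec0 b s i) end.

Lemma comp_rec_base (B : nat -> nat) (S : nat -> nat -> nat -> nat) :
  comp B -> comp (fun d => S (cfst d) (cfst (csnd d)) (csnd (csnd d))) ->
  comp (fun c => Rec0 (B (cfst c)) (S (cfst c)) (csnd c)).
Proof.
move=> [p Hp] [q Hq]; exists (PRec p q) => c.
have {1}-> : c = cpair (cfst c) (csnd c) by rewrite cpair_eta.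
elim: (csnd c) => /= [|n IH].
  by constructor; apply: Hp.
econstructor; first exact: IH.
have := Hq (cpair (cfst c) (cpair n (Rec0 (B (cfst c)) (S (cfst c)) n))).
rewrite !cfst_pair !csnd_pair cfst_pair; exact.
Qed.

Lemma comp_rec (B : nat -> nat) (S : nat -> nat -> nat -> nat) N :
  comp B -> comp (fun d => S (cfst d) (cfst (csnd d)) (csnd (csnd d))) -> comp N ->
  comp (fun c => Rec0 (B c) (S c) (N c)).
Proof.
move=> HB HS HN.
have := comp_comp (comp_rec_base HB HS) (comp_pair comp_id HN).
by apply: comp_ext => x; rewrite cfst_pair csnd_pair.
Qed.

Definition case (n a : nat) (b : nat -> nat) := match n with 0 => a | k.+1 => b k end.

Lemma comp_case N A (B : nat -> nat -> nat) :
  comp N -> comp A -> comp (fun d => B (cfst d) (csnd d)) ->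
  comp (fun c => case (N c) (A c) (B c)).
Proof.
move=> HN HA HB.
have : comp (fun c => Rec0 (A c) (fun i _ => B c i) (N c)).
  apply: comp_rec => //.
  have := comp_comp HB (comp_pair (comp_fst comp_id) (comp_fst (comp_snd comp_id))).
  by apply: comp_ext => x; rewrite cfst_pair csnd_pair.
apply: comp_ext => c; by case: (N c).
Qed.

Lemma comp_app2 (F : nat -> nat -> nat) A B :
  comp (fun d => F (cfst d) (csnd d)) -> comp A -> comp B -> comp (fun c => F (A c) (B c)).
Proof.
move=> HF HA HB; have := comp_comp HF (comp_pair HA HB).
by apply: comp_ext => x; rewrite cfst_pair csnd_pair.
Qed.

Lemma comp_mu R M : comp R ->
  (forall x, R (cpair x (M x)) = 0 /\ forall z, z < M x -> R (cpair x z) <> 0) -> comp M.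
Proof.
move=> [p Hp] HM; exists (PMu p) => x; case: (HM x) => H0 H1.
constructor; first by rewrite -H0.
by move=> z hz; exists (R (cpair x z)); split => //; apply: H1.
Qed.

Lemma comp_rec' (B : nat -> nat) (S : nat -> nat -> nat -> nat) N :
  comp B -> comp (fun d => S (cfst d) (cfst (csnd d)) (csnd (csnd d))) -> comp N ->
  comp (fun c => Rec0 (B c) (fun i r => S c i r) (N c)).
Proof. exact: comp_rec. Qed.

Lemma comp_case' N A (B : nat -> nat -> nat) :
  comp N -> comp A -> comp (fun d => B (cfst d) (csnd d)) ->
  comp (fun c => case (N c) (A c) (fun k => B c k)).
Proof. exact: comp_case. Qed.

Ltac cstep := first [ assumption | apply comp_const | apply comp_id | apply comp_S
  | apply comp_pair | apply comp_fst | apply comp_snd | apply comp_oc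
  | apply comp_case' | apply comp_rec' | (apply comp_comp; [assumption|]) ].
Ltac csolve := repeat (cbv beta; cstep).

Lemma comp_pred A : comp A -> comp (fun c => (A c).-1).
Proof.
move=> HA; have : comp (fun c => case (A c) 0 (fun k => k)) by csolve.
by apply: comp_ext => c; case: (A c).
Qed.

Lemma comp_sub A B : comp A -> comp B -> comp (fun c => A c - B c).
Proof.
move=> HA HB; have : comp (fun c => Rec0 (A c) (fun _ r => r.-1) (B c)).
  by apply: comp_rec' => //; apply: comp_pred; csolve.
apply: comp_ext => c; elim: (B c) => [|n IH] /=; [by rewrite subn0 | by rewrite IH subnS].
Qed.

Lemma comp_add A B : comp A -> comp B -> comp (fun c => A c + B c).
Proof.
move=> HA HB; have : comp (fun c => Rec0 (A c) (fun _ r => r.+1) (B c)) by csolve.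
apply: comp_ext => c; elim: (B c) => //= [|n ->]; by rewrite ?addn0 ?addnS.
Qed.

Lemma comp_odd A : comp A -> comp (fun c => nat_of_bool (odd (A c))).
Proof.
move=> HA; have : comp (fun c => Rec0 0 (fun _ r => case r 1 (fun _ => 0)) (A c)) by csolve.
apply: comp_ext => c; elim: (A c) => //= n ->; by case: (odd n).
Qed.

Lemma comp_half A : comp A -> comp (fun c => (A c)./2).
Proof.
move=> HA.
have : comp (fun c => Rec0 0 (fun i r => case (nat_of_bool (odd i)) r (fun _ => r.+1)) (A c)).
  apply: comp_rec'; [csolve| |csolve].
  cbv beta; apply: comp_case'; [apply: comp_odd; csolve | csolve | csolve].
apply: comp_ext => c; elim: (A c) => //= n ->.
by rewrite -[in RHS](odd_double_half n); case: (odd n) => /=; rewrite ?uphalf_double ?half_double /=.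
Qed.

Lemma comp_ifodd A X Y : comp A -> comp X -> comp Y ->
  comp (fun c => if odd (A c) then X c else Y c).
Proof.
move=> HA HX HY; have : comp (fun c => case (nat_of_bool (odd (A c))) (Y c) (fun _ => X c)).
  by apply: comp_case'; [exact: comp_odd | done | csolve].
by apply: comp_ext => c; case: (odd (A c)).
Qed.

Definition headc c := case c 0 (fun c' => cfst c').
Definition tailc c := case c 0 (fun c' => csnd c').
Definition lookup (tb q : nat) := headc (Rec0 tb (fun _ r => tailc r) q).
Definition build (t : nat) (F : nat -> nat) :=
  Rec0 0 (fun j r => (cpair (F (t - j.+1)) r).+1) t.

Lemma comp_lookup T Q : comp T -> comp Q -> comp (fun c => lookup (T c) (Q c)).
Proof. move=> HT HQ; rewrite /lookup /headc /tailc; csolve. Qed.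

Ltac cstep2 := first [ assumption | apply comp_const | apply comp_id | apply comp_S
  | apply comp_pair | apply comp_fst | apply comp_snd | apply comp_oc
  | apply comp_case' | apply comp_rec' | apply comp_lookup | apply comp_sub | apply comp_add
  | apply comp_pred | apply comp_half | apply comp_ifodd
  | (apply comp_app2; [assumption| |]) | (apply comp_comp; [assumption|]) ].
Ltac csolve2 := repeat (cbv beta; cstep2).

Lemma comp_build T (F : nat -> nat -> nat) : comp T -> comp (fun d => F (cfst d) (csnd d)) ->
  comp (fun c => build (T c) (F c)).
Proof. move=> HT HF; rewrite /build; csolve2. Qed.
End Comp.

Lemma lookup_cons a l q : lookup (cpair a l).+1 q = if q is q'.+1 then lookup l q' else a.
Proof.
rewrite /lookup; case: q => [|q] /=; first by rewrite /headc /= cfst_pair.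
congr headc; elim: q => [|q IH] /=; first by rewrite /tailc /= csnd_pair.
by rewrite IH.
Qed.

Lemma lookup0 q : lookup 0 q = 0.
Proof. rewrite /lookup; suff -> : Rec0 0 (fun _ r => tailc r) q = 0 by []. by elim: q => //= q ->. Qed.

Lemma lookup_build t F q : lookup (build t F) q = if q < t then F q else 0.
Proof.
rewrite /build.
suff H : forall j, j <= t -> forall q, lookup (Rec0 0 (fun j r => (cpair (F (t - j.+1)) r).+1) j) q
   = if q < j then F (t - j + q) else 0.
  by rewrite H // subnn add0n.
elim=> [|j IH] hj q0 /=; first by rewrite lookup0.
rewrite lookup_cons; case: q0 => [|q0] /=; first by rewrite addn0.
rewrite IH ?ltnS; last by apply: ltnW.
case: ifP => // _; congr F; rewrite subnS addnS; lia.
Qed.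

Ltac cstep2 := first [ assumption | apply comp_const | apply comp_id | apply comp_S
  | apply comp_pair | apply comp_fst | apply comp_snd | apply comp_oc
  | apply comp_case' | apply comp_rec' | apply comp_lookup | apply comp_sub | apply comp_add
  | apply comp_pred | apply comp_half | apply comp_ifodd | apply comp_build
  | (apply comp_app2; [assumption| |]) | (apply comp_comp; [assumption|]) ].
Ltac csolve2 := repeat (cbv beta; cstep2).

Fixpoint Ev (g : nat -> nat) (p : prog) (k x tb : nat) : nat :=
 match p with
 | PZero => 1
 | PSucc => x.+2
 | PId => x.+1
 | POrc => if odd x then lookup tb x./2 else (g x./2).+1
 | PFst => (cfst x).+1
 | PSnd => (csnd x).+1
 | PComp h g' => case (Ev g g' k x tb) 0 (fun v => Ev g h k v tb)
 | PPair a b => case (Ev g a k x tb) 0 (fun u => case (Ev g b k x tb) 0 (fun v => (cpair u v).+1))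
 | PRec b s => Rec0 (Ev g b k (cfst x) tb)
      (fun i r => case r 0 (fun r' => Ev g s k (cpair (cfst x) (cpair i r')) tb)) (csnd x)
 | PMu t => case (Rec0 0 (fun j r => case r (case (Ev g t k (cpair x j) tb) 1
                (fun w => case w j.+2 (fun _ => 0))) (fun r' => r'.+1)) k)
             0 (fun r' => case r' 0 (fun y => y.+1))
 end.

Lemma comp_Ev o g p : comp o g -> forall K X T, comp o K -> comp o X -> comp o T ->
  comp o (fun c => Ev g p (K c) (X c) (T c)).
Proof.
move=> Hg; elim: p => [| | | | | |h IHh g' IHg|a IHa b IHb|b IHb s IHs|t IHt] K X T HK HX HT /=;
  repeat (cbv beta; first [cstep2 | apply IHh | apply IHg | apply IHa | apply IHb | apply IHs | apply IHt]).
Qed.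

Definition Mstep g t k x tb := fun j r => case r (case (Ev g t k (cpair x j) tb) 1
                (fun w => case w j.+2 (fun _ => 0))) (fun r' => r'.+1).

Lemma Ev_Mu g t k x tb : Ev g (PMu t) k x tb =
  case (Rec0 0 (Mstep g t k x tb) k) 0 (fun r' => case r' 0 (fun y => y.+1)).
Proof. by []. Qed.

Lemma Ev_sound g h p : forall k x tb v, (forall q w, lookup tb q = w.+1 -> h q = w) ->
  Ev g p k x tb = v.+1 -> eval (join g h) p x v.
Proof.
elim: p => [| | | | | |h' IHh g' IHg|a IHa b IHb|b IHb s IHs|t IHt] k x tb v Htb /=.
- by case=> <-; constructor.
- by case=> <-; constructor.
- by case=> <-; constructor.
- move=> E; have -> : v = join g h x.
    rewrite /join; move: E; case: (odd x) => [/Htb //|]; by case.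
  by constructor.
- by case=> <-; constructor.
- by case=> <-; constructor.
- case E1: (Ev g g' k x tb) => [|y] //= E2.
  by econstructor; [apply: IHg E1 | apply: IHh E2].
- case E1: (Ev g a k x tb) => [|u] //=; case E2: (Ev g b k x tb) => [|w] //= [<-].
  by constructor; [apply: IHa E1 | apply: IHb E2].
- have -> : x = cpair (cfst x) (csnd x) by rewrite cpair_eta.
  rewrite cfst_pair csnd_pair.
  elim: (csnd x) v => [|y IH] v /=; first by move=> E; constructor; apply: IHb E.
  case E1: (Rec0 _ _ y) => [|r] //= E2.
  by econstructor; [apply: IH E1 | apply: IHs E2].
- rewrite -/(Mstep g t k x tb).
  have inv : forall j, (Rec0 0 (Mstep g t k x tb) j = 0 ->
      forall z, z < j -> exists w, eval (join g h) t (cpair x z) w /\ w <> 0) /\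
    (forall y, Rec0 0 (Mstep g t k x tb) j = y.+2 -> eval (join g h) t (cpair x y) 0 /\
      forall z, z < y -> exists w, eval (join g h) t (cpair x z) w /\ w <> 0).
    elim=> [|j [IH1 IH2]]; first by split.
    rewrite [Rec0 0 _ j.+1]/=.
    case E: (Rec0 0 (Mstep g t k x tb) j) => [|r]; rewrite /Mstep /=; last first.
      split; first by [].
      by move=> y Ey; apply: IH2; rewrite E.
    case E2: (Ev g t k (cpair x j) tb) => [|w] /=; first by split.
    case: w E2 => [|w] E2 /=.
      split => // y [<-]; split; first by apply: IHt E2.
      exact: IH1.
    split => // _ z; rewrite ltnS leq_eqVlt; case/orP => [/eqP ->|hz].
      by exists w.+1; split => //; apply: IHt E2.
    exact: IH1.
  case E: (Rec0 0 _ k) => [|[|y]] //= [<-].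
  have [H1 H2] := (inv k).2 y E.
  by constructor.
Qed.

Definition good h tb N := forall q, q < N -> lookup tb q = (h q).+1.

Lemma good_mono h tb N N' : N <= N' -> good h tb N' -> good h tb N.
Proof. by move=> le H q hq; apply: H; apply: leq_trans le. Qed.

Definition EvOK g h p x v N := forall k tb, N <= k -> good h tb N -> Ev g p k x tb = v.+1.

Lemma EvOK_mono g h p x v N N' : N <= N' -> EvOK g h p x v N -> EvOK g h p x v N'.
Proof.
move=> le H k tb hk hg; apply: H; first exact: leq_trans hk.
exact: good_mono hg.
Qed.

Lemma Ev_complete g h p x v : eval (join g h) p x v -> exists N, EvOK g h p x v N.
Proof.
move=> H; elim/eval_ind2: H.
- by move=> x0; exists 0.
- by move=> x0; exists 0.
- by move=> x0; exists 0.
- move=> x0; exists x0.+1 => k tb hk hg /=; rewrite /join; case: ifP => // _.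
  apply: hg; rewrite ltnS leq_half_double -addnn; lia.
- by move=> x0; exists 0.
- by move=> x0; exists 0.
- move=> h' g' x0 y z _ [N1 H1] _ [N2 H2]; exists (maxn N1 N2) => k tb hk hg /=.
  rewrite (EvOK_mono (leq_maxl N1 N2) H1) //=.
  by rewrite (EvOK_mono (leq_maxr N1 N2) H2).
- move=> a b x0 u w _ [N1 H1] _ [N2 H2]; exists (maxn N1 N2) => k tb hk hg /=.
  rewrite (EvOK_mono (leq_maxl N1 N2) H1) //=.
  by rewrite (EvOK_mono (leq_maxr N1 N2) H2).
- move=> b s x0 w _ [N1 H1]; exists N1 => k tb hk hg /=.
  by rewrite cfst_pair csnd_pair /=; apply: H1.
- move=> b s x0 y r w _ [N1 H1] _ [N2 H2]; exists (maxn N1 N2) => k tb hk hg.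
  have := (EvOK_mono (leq_maxl N1 N2) H1) k tb hk hg.
  rewrite /= !cfst_pair !csnd_pair /= => ->  /=.
  by rewrite (EvOK_mono (leq_maxr N1 N2) H2).
- move=> t x0 y _ [N0 H0] Hz.
  have [Nz HNz] : exists Nz, forall z, z < y -> exists w, w <> 0 /\ EvOK g h t (cpair x0 z) w Nz.
    elim: y {H0 N0} Hz => [|y IH] Hz; first by exists 0.
    case: IH => [z hz|Nz HNz]; first by apply: Hz; apply: ltnW.
    case: (Hz y (ltnSn y)) => w [_ hw [Nw HNw]].
    exists (maxn Nz Nw) => z; rewrite ltnS leq_eqVlt; case/orP => [/eqP ->|hz].
      by exists w; split => //; apply: EvOK_mono HNw; apply: leq_maxr.
    case: (HNz z hz) => w' [hw' Hw']; exists w'; split => //.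
    by apply: EvOK_mono Hw'; apply: leq_maxl.
  exists (maxn (maxn N0 Nz) y.+1) => k tb hk hg.
  have hk0 : N0 <= k by apply: leq_trans hk; rewrite !leq_max leqnn.
  have hg0 : good h tb N0 by apply: good_mono hg; rewrite !leq_max leqnn.
  have hkz : Nz <= k by apply: leq_trans hk; rewrite !leq_max leqnn !orbT.
  have hgz : good h tb Nz by apply: good_mono hg; rewrite !leq_max leqnn !orbT.
  have hky : y < k by apply: leq_trans hk; rewrite !leq_max leqnn !orbT.
  rewrite Ev_Mu.
  have M0 : forall j, j <= y -> Rec0 0 (Mstep g t k x0 tb) j = 0.
    elim=> [|j IH] hj //=; rewrite IH ?(ltnW hj) //= /Mstep /=.
    case: (HNz j hj) => w [hw Hw]; rewrite (Hw k tb hkz hgz) /=.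
    by clear Hw; case: w hw.
  have M1 : forall j, y < j -> Rec0 0 (Mstep g t k x0 tb) j = y.+2.
    elim=> [|j IH] hj //=; move: hj; rewrite ltnS leq_eqVlt; case/orP => [/eqP <-|hj].
      by rewrite M0 //= /Mstep /= (H0 k tb hk0 hg0).
    by rewrite IH.
  by rewrite M1.
Qed.

Lemma good_build h N : good h (build N (fun q => (h q).+1)) N.
Proof. by move=> q hq; rewrite lookup_build hq. Qed.

Lemma EvOK_use g h p x v N : EvOK g h p x v N -> Ev g p N x (build N (fun q => (h q).+1)) = v.+1.
Proof. move=> H; apply: H => //; exact: good_build. Qed.

Lemma eval_det g h p x v1 v2 : eval (join g h) p x v1 -> eval (join g h) p x v2 -> v1 = v2.
Proof.
move=> /(Ev_complete (g:=g)) [N1 H1] /(Ev_complete (g:=g)) [N2 H2].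
have := EvOK_use (EvOK_mono (leq_maxl N1 N2) H1).
by rewrite (EvOK_use (EvOK_mono (leq_maxr N1 N2) H2)) => -[].
Qed.

Lemma sound_build g h t p x v : Ev g p t x (build t (fun q => (h q).+1)) = v.+1 ->
  eval (join g h) p x v.
Proof.
apply: Ev_sound => q w; rewrite lookup_build; case: ifP => // _; by case.
Qed.

Ltac cstep3 := first [ cstep2 | apply comp_Ev ].
Ltac csolve3 := repeat (cbv beta; cstep3).

Lemma app_comp o g (H : nat -> nat -> nat) out Q : comp o g ->
  comp o (fun c => H (cfst c) (csnd c)) ->
  (forall n m, eval (join g (H n)) Q m (out n m)) ->
  comp o (fun c => out (cfst c) (csnd c)).
Proof.
move=> Hg HH Hout.
pose E c t := Ev g Q t (csnd c) (build t (fun q => (H (cfst c) q).+1)).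
have ex : forall c, exists t, E c t != 0.
  move=> c; case: (Ev_complete (g:=g) (Hout (cfst c) (csnd c))) => N HN.
  by exists N; rewrite /E (EvOK_use HN).
pose M c := ex_minn (ex c).
have HM : comp o M.
  apply: (comp_mu (R := fun d => case (E (cfst d) (csnd d)) 1 (fun _ => 0))).
    rewrite /E; csolve3.
  move=> c; rewrite !cfst_pair !csnd_pair /M; case: ex_minnP => t Ht Hmin; split.
    by case: (E c t) Ht.
  move=> z hz; rewrite cfst_pair csnd_pair; case Ez: (E c z) => [|w] //= _.
  by have := Hmin z; rewrite Ez /= => /(_ isT); rewrite leqNgt hz.
have : comp o (fun c => (E c (M c)).-1) by rewrite /E; csolve3.
apply: comp_ext => c; rewrite /M; case: ex_minnP => t Ht _.
case Et: (E c t) Ht => [|v] //= _.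
have := sound_build Et; move/eval_det => /(_ _ (Hout (cfst c) (csnd c))) ->.
by [].
Qed.

Section Iter.
Variables (o s : nat -> nat) (H : nat -> nat -> nat) (P : prog).
Hypothesis Hs : comp o s.
Hypothesis H0 : comp o (H 0).
Hypothesis HH : forall n m, eval (join s (H n)) P m (H n.+1 m).

Definition Tab t n := Rec0 (build t (fun m => (H 0 m).+1))
  (fun _ tb => build t (fun m => Ev s P t m tb)) n.

Lemma Tab_sound t n m v : lookup (Tab t n) m = v.+1 -> v = H n m.
Proof.
elim: n m v => [|n IH] m v /=; rewrite lookup_build; case: ifP => // _; first by case.
move/(Ev_sound (h := H n)) => /(_ (fun q w E => esym (IH q w E))) E.
exact: eval_det E (HH n m).
Qed.

Lemma Tab_complete n B : exists T, forall t, T <= t -> forall m, m < B -> lookup (Tab t n) m = (H n m).+1.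
Proof.
elim: n B => [|n IH] B.
  by exists B => t hT m hm /=; rewrite lookup_build (leq_trans hm hT).
have [N HN] : exists N, forall m, m < B -> EvOK s (H n) P m (H n.+1 m) N.
  elim: B => [|B [N HN]]; first by exists 0.
  case: (Ev_complete (g:=s) (HH n B)) => NB HB.
  exists (maxn N NB) => m; rewrite ltnS leq_eqVlt; case/orP => [/eqP ->|hm].
    by apply: EvOK_mono HB; apply: leq_maxr.
  by apply: EvOK_mono (HN m hm); apply: leq_maxl.
case: (IH N) => T' HT'.
exists (maxn (maxn T' N) B) => t ht m hm /=.
have hT' : T' <= t by apply: leq_trans ht; rewrite !leq_max leqnn.
have hN : N <= t by apply: leq_trans ht; rewrite !leq_max leqnn !orbT.
have hB : B <= t by apply: leq_trans ht; rewrite !leq_max leqnn !orbT.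
rewrite lookup_build (leq_trans hm hB).
apply: (HN m hm) => // q hq; exact: HT'.
Qed.

Lemma iter_comp : comp o (fun c => H (cfst c) (csnd c)).
Proof.
pose E c t := lookup (Tab t (cfst c)) (csnd c).
have ex : forall c, exists t, E c t != 0.
  move=> c; case: (Tab_complete (cfst c) (csnd c).+1) => T HT.
  by exists T; rewrite /E (HT T (leqnn T) _ (ltnSn _)).
pose M c := ex_minn (ex c).
have HM : comp o M.
  apply: (comp_mu (R := fun d => case (E (cfst d) (csnd d)) 1 (fun _ => 0))).
    rewrite /E /Tab; csolve3.
  move=> c; rewrite !cfst_pair !csnd_pair /M; case: ex_minnP => t Ht Hmin; split.
    by case: (E c t) Ht.
  move=> z hz; rewrite cfst_pair csnd_pair; case Ez: (E c z) => [|w] //= _.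
  by have := Hmin z; rewrite Ez /= => /(_ isT); rewrite leqNgt hz.
have : comp o (fun c => (E c (M c)).-1) by rewrite /E /Tab; csolve3.
apply: comp_ext => c; rewrite /M; case: ex_minnP => t Ht _.
case Et: (E c t) Ht => [|v] //= _.
by rewrite (Tab_sound Et).
Qed.
End Iter.

Lemma prog_of_indexK p : prog_of_index (pickle p) = p.
Proof. by rewrite /prog_of_index pickleK. Qed.

Lemma comp_Z Z g : comp (chi Z) g -> Zcomputable Z g.
Proof. by case=> p Hp; exists (pickle p) => n; rewrite /Phi prog_of_indexK. Qed.

Lemma Z_comp Z g : Zcomputable Z g -> comp (chi Z) g.
Proof. by case=> e He; exists (prog_of_index e). Qed.

Lemma comp_eq o A B : comp o A -> comp o B -> comp o (fun c => nat_of_bool (A c == B c)).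
Proof.
move=> HA HB.
have : comp o (fun c => case ((A c - B c) + (B c - A c)) 1 (fun _ => 0)) by csolve3.
apply: comp_ext => c; case: eqP => [->|ne]; first by rewrite subnn.
case E: (_ + _) => //; exfalso; apply: ne; lia.
Qed.

Lemma K2_eq Z (a b : K2 Z) : proj1_sig a = proj1_sig b -> a = b.
Proof.
case: a b => [a Ha] [b Hb] /= E; subst b; congr exist; exact: proof_irrelevance.
Qed.

Lemma lift_Z X Y g : Treducible X Y -> Zcomputable X g -> Zcomputable Y g.
Proof.
move=> [e He] [e' He']; exists (pickle (subst (prog_of_index e') (prog_of_index e))) => n.
rewrite /Phi prog_of_indexK; apply: eval_subst (He' n); exact: He.
Qed.

Definition constK Z (k : nat) : K2 Z := exist _ (fun _ => k) (comp_Z (comp_const (chi Z) k)).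

Definition C1 := PComp PSucc PZero.
Definition Psig := PComp PSucc (PComp PSucc (PComp POrc C1)).
Definition Px := PComp POrc (PComp POrc C1).
Definition xf (X : nat -> bool) (m : nat) := case m (pickle Px) (fun m' => chi X m').

Lemma xf_comp X : Zcomputable X (xf X).
Proof. apply: comp_Z; rewrite /xf; csolve3. Qed.

Theorem theorem6p6 (X Y : nat -> bool) :
  (exists f : K2 X -> K2 Y, K2_embedding f) <-> Treducible X Y.
Proof.
split; last first.
  move=> HT; exists (fun a => exist _ (proj1_sig a) (lift_Z HT (proj2_sig a))); split.
    by move=> a b E; apply: K2_eq; move: (f_equal (@proj1_sig _ _) E).
  by move=> a b c.
case=> f [finj fapp].
pose sig := constK X (pickle Psig).
pose num n := constK X (n.*2.+2).
pose x' : K2 X := exist _ (xf X) (xf_comp X).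
pose cX n := constK X (chi X n).
have Hsig : forall n, K2app sig (num n) (num n.+1).
  move=> n m; rewrite /Phi /= prog_of_indexK /Psig /C1.
  apply: eComp; last by apply: eSucc.
  apply: eComp; last by apply: eSucc.
  apply: eComp; last exact: (eOrc _ 1).
  apply: eComp; first by apply: eZero.
  by apply: eSucc.
have Hx : forall n, K2app x' (num n) (cX n).
  move=> n m; rewrite /Phi /= prog_of_indexK /Px /C1.
  apply: eComp; last first.
    have -> : chi X n = join (xf X) (fun _ => n.*2.+2) (n.*2.+2).
      by rewrite /join /= odd_double /= doubleK.
    by apply: eOrc.
  apply: eComp; last exact: (eOrc _ 1).
  apply: eComp; first by apply: eZero.
  by apply: eSucc.
pose sY := proj1_sig (f sig).
pose HY n := proj1_sig (f (num n)).
have HsY : comp (chi Y) sY by apply: Z_comp; exact: proj2_sig.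
have HY0 : comp (chi Y) (HY 0) by apply: Z_comp; exact: proj2_sig.
have HHY : comp (chi Y) (fun c => HY (cfst c) (csnd c)).
  apply: (iter_comp (s := sY) (P := prog_of_index (sY 0))) => // n m.
  exact: (fapp _ _ _ (Hsig n) m).
pose gY := proj1_sig (f x').
have HgY : comp (chi Y) gY by apply: Z_comp; exact: proj2_sig.
pose out n m := proj1_sig (f (cX n)) m.
have Hout : comp (chi Y) (fun c => out (cfst c) (csnd c)).
  apply: (app_comp (g := gY) (H := HY) (Q := prog_of_index (gY 0))) => // n m.
  exact: (fapp _ _ _ (Hx n) m).
have [m0 Hm0] : exists m0, proj1_sig (f (constK X 1)) m0 <> proj1_sig (f (constK X 0)) m0.
  apply: NNPP => Hn.
  have E : proj1_sig (f (constK X 1)) = proj1_sig (f (constK X 0)).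
    apply: functional_extensionality => m; apply: NNPP => Hne; apply: Hn; by exists m.
  have := finj _ _ (K2_eq E) => /(f_equal (@proj1_sig _ _)) /(f_equal (fun g => g 0)) /=.
  by [].
pose a := proj1_sig (f (constK X 1)) m0.
have Hc : comp (chi Y) (fun n => nat_of_bool (out (cfst (cpair n m0)) (csnd (cpair n m0)) == a)).
  apply: comp_eq; last by apply: comp_const.
  apply: (comp_comp Hout); csolve3.
apply: comp_Z; apply: comp_ext Hc => n; rewrite cfst_pair csnd_pair /out /cX /a.
rewrite /chi; case: (X n) => /=; first by rewrite eqxx.
by case: eqP => // E; exfalso; apply: Hm0; rewrite E.
Qed.
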